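(* Let $t_1, t_2 \in \mathsf{Topo}$ and let $f$ embed $t_1$ inside $t_2$. For every $q \in \mathsf{PIFOTree}(t_1)$, if $\mathsf{pop}(q)$ is defined, then so is $\mathsf{pop}(\widehat f(q))$.
   Context: Fix a set $\mathsf{Pkt}$ of packets and a totally ordered set $\mathsf{Rk}$ of ranks (smaller is more favorable). PIFOs: for a set $S$, a PIFO over $S$ is a finite sequence of pairs $(s,r)\in S\times\mathsf{Rk}$ in insertion order; $\mathsf{PIFO}(S)$ is the set of these. $\mathsf{pop}_{\mathsf{PIFO}}(p)$ is undefined if $p$ is empty; otherwise it removes the entry of minimal rank (earliest-inserted among ties) and returns $(s,p')$, its element and the rest. Topologies: $\mathsf{Topo}$ is the smallest set with $*\in\mathsf{Topo}$ and $\mathsf{Node}(\vec t)\in\mathsf{Topo}$ for $n\in\mathbb{N}$, $\vec t\in\mathsf{Topo}^n$. PIFO trees: $\mathsf{Leaf}(p)\in\mathsf{PIFOTree}( * )$ for $p\in\mathsf{PIFO}(\mathsf{Pkt})$; $\mathsf{Internal}(\vec q,p)\in\mathsf{PIFOTree}(\mathsf{Node}(\vec t))$ whenever $\vec t\in\mathsf{Topo}^n$, $p\in\mathsf{PIFO}(\{1,\dots,n\})$, $\vec q[i]\in\mathsf{PIFOTree}(\vec t[i])$. $\vec q[q'/i]$ replaces the $i$-th entry by $q'$. pop (partial): $\mathsf{pop}(\mathsf{Leaf}(p))=(pkt,\mathsf{Leaf}(p'))$ if $\mathsf{pop}_{\mathsf{PIFO}}(p)=(pkt,p')$; $\mathsf{pop}(\mathsf{Internal}(\vec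 q,p))=(pkt,\mathsf{Internal}(\vec q[q'/i],p'))$ if $\mathsf{pop}_{\mathsf{PIFO}}(p)=(i,p')$ and $\mathsf{pop}(\vec q[i])=(pkt,q')$; undefined otherwise. Addresses: $\mathsf{Addr}(t)\subseteq\mathbb{N}^*$ is the smallest set with $\epsilon\in\mathsf{Addr}(t)$ and $i\cdot\alpha\in\mathsf{Addr}(\mathsf{Node}(\vec t))$ for $1\le i\le n$, $\alpha\in\mathsf{Addr}(\vec t[i])$. Subtrees: $t/\epsilon=t$, $\mathsf{Node}(\vec t)/(i\cdot\alpha)=\vec t[i]/\alpha$. An embedding of $t_1$ in $t_2$ is an injective $f:\mathsf{Addr}(t_1)\to\mathsf{Addr}(t_2)$ with $f(\epsilon)=\epsilon$, $t_2/f(\alpha)=*$ whenever $t_1/\alpha=*$, and $\alpha$ a prefix of $\alpha'$ iff $f(\alpha)$ a prefix of $f(\alpha')$. If $t_1=*$ then $t_2=*$; if $t_1=\mathsf{Node}(\vec t_1)$, the map $f_i$ defined by $f(i\cdot\alpha)=f(i)\cdot f_i(\alpha)$ is an embedding of $t_1/i$ in $t_2/f(i)$. Lifting $\widehat f:\mathsf{PIFOTree}(t_1)\to\mathsf{PIFOTree}(t_2)$, by recursion on $t_1$: if $t_1=*$, $\widehat f(q)=q$. If $t_1=\mathsf{Node}(\vec t_1)$ with $n$ children and $q=\mathsf{Internal}(\vec q,p)$, define for each address $\alpha$ of $t_2$ that is a prefix of some $f(i)$ a tree $\widehat f(q)_\alpha\in\mathsf{PIFOTree}(t_2/\alpha)$,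 from longer to shorter $\alpha$: if $\alpha=f(i)$, $\widehat f(q)_\alpha=\widehat{f_i}(\vec q[i])$; otherwise $t_2/\alpha$ has some $m$ children and $\widehat f(q)_\alpha=\mathsf{Internal}(\vec q_\alpha,p_\alpha)$, where $\vec q_\alpha[j]=\widehat f(q)_{\alpha\cdot j}$ if $\alpha\cdot j$ is a prefix of some $f(i)$ and otherwise $\vec q_\alpha[j]$ is the tree of topology $t_2/(\alpha\cdot j)$ with all PIFOs empty; and $p_\alpha$ is obtained from $p$ by replacing each entry $(i,r)$ by $(j,r)$ where $\alpha\cdot j$ is a prefix of $f(i)$, deleting entries for which no such $j$ exists, keeping the order. Finally $\widehat f(q)=\widehat f(q)_\epsilon$. *)

(* Defs.v *)
From mathcomp Require Import all_boot all_order.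
Set Implicit Arguments. Unset Strict Implicit. Unset Printing Implicit Defensive.
Import Order.TTheory.

Inductive Topo : Type := Star | Node of seq Topo.

(* Addresses: child indices are 1-based, as in the paper. *)
Fixpoint in_addr (t : Topo) (a : seq nat) : bool :=
  match a with
  | [::] => true
  | i :: a' => if t is Node ts then (0 < i <= size ts) && in_addr (nth Star ts i.-1) a'
               else false
  end.

(* t / alpha (only meaningful for alpha in Addr t; defaults to Star otherwise) *)
Fixpoint subtopo (t : Topo) (a : seq nat) : Topo :=
  match a with
  | [::] => t
  | i :: a' => if t is Node ts then subtopo (nth Star ts i.-1) a' else Star
  end.

Definition is_embedding (t1 t2 : Topo) (f : seq nat -> seq nat) : Prop :=
  [/\ f [::] = [::],
      (forall a, in_addr t1 a -> in_addr t2 (f a)),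
      (forall a b, in_addr t1 a -> in_addr t1 b -> f a = f b -> a = b),
      (forall a, in_addr t1 a -> subtopo t1 a = Star -> subtopo t2 (f a) = Star) &
      (forall a b, in_addr t1 a -> in_addr t1 b -> prefix a b = prefix (f a) (f b))].

(* f_i : f (i . alpha) = f (i) . f_i (alpha) *)
Definition sub_emb (f : seq nat -> seq nat) (i : nat) : seq nat -> seq nat :=
  fun a => drop (size (f [:: i])) (f (i :: a)).

Section PIFO.
Context {d : Order.disp_t} (Rk : orderType d) (Pkt : Type).


(* PIFOs: sequences of (element, rank) in insertion order. *)
Definition PIFO (S : Type) := seq (S * Rk).

(* pop of a PIFO: remove the entry of minimal rank, earliest among ties;
   returns the removed entry (element and rank) and the rest. *)
Fixpoint pop_entry {S : Type} (p : PIFO S) : option ((S * Rk) * PIFO S) :=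
  match p with
  | [::] => None
  | e :: p' =>
      match pop_entry p' with
      | None => Some (e, [::])
      | Some (e', p'') => if (e.2 <= e'.2)%O then Some (e, p') else Some (e', e :: p'')
      end
  end.

Definition pop_PIFO {S : Type} (p : PIFO S) : option (S * PIFO S) :=
  omap (fun ep => (ep.1.1, ep.2)) (pop_entry p).

(* Untyped PIFO trees; typing by a topology is given by [typed] below. *)
Inductive PTree : Type :=
| Leaf of PIFO Pkt
| Internal of seq PTree & PIFO nat.

Inductive typed : Topo -> PTree -> Prop :=
| typed_leaf (p : PIFO Pkt) : typed Star (Leaf p)
| typed_internal (ts : seq Topo) (qs : seq PTree) (p : PIFO nat) :
    size qs = size ts ->
    (forall k, k < size ts -> typed (nth Star ts k) (nth (Leaf [::]) qs k)) ->
    (forall e, e \in map fst p -> (0 < e <= size ts)%N) ->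
    typed (Node ts) (Internal qs p).

Fixpoint pop (q : PTree) : option (Pkt * PTree) :=
  match q with
  | Leaf p => omap (fun r => (r.1, Leaf r.2)) (pop_PIFO p)
  | Internal qs p =>
      match pop_PIFO p with
      | None => None
      | Some (i, p') =>
          let fix go (l : seq PTree) (k : nat) : option (Pkt * seq PTree) :=
            match l with
            | [::] => None
            | c :: l' =>
                match k with
                | 0 => None
                | 1 => omap (fun r => (r.1, r.2 :: l')) (pop c)
                | k'.+1 => omap (fun r => (r.1, c :: r.2)) (go l' k')
                end
            end in
          omap (fun r => (r.1, Internal r.2 p')) (go qs i)
      end
  end.

Fixpoint empty_tree (t : Topo) : PTree :=
  match t with
  | Star => Leaf [::]
  | Node ts => Internal (map empty_tree ts) [::]
  end.

Definition child_toward (a b : seq nat) : option nat :=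
  if prefix a b && (size a < size b) then Some (nth 0 b (size a)) else None.

(* p_alpha: replace (i, r) by (j, r) where alpha . j is a prefix of f(i),
   deleting entries with no such j, keeping the order. *)
Definition restrict_pifo (fs : seq (seq nat)) (a : seq nat) (p : PIFO nat) : PIFO nat :=
  pmap (fun e : nat * Rk => omap (fun j => (j, e.2)) (child_toward a (nth [::] fs e.1.-1))) p.

(* Construction of \hat f(q)_alpha, for the subtree t = t2 / alpha.
   fs = [f(1); ...; f(n)], L = [\hat{f_1}(q_1); ...; \hat{f_n}(q_n)], p the root PIFO. *)
Fixpoint build (fs : seq (seq nat)) (L : seq PTree) (p : PIFO nat)
    (t : Topo) (a : seq nat) : PTree :=
  let idx := find (pred1 a) fs in
  if idx < size fs then nth (Leaf [::]) L idx
  else match t with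
       | Star => Leaf [::]
       | Node ts =>
           let fix go (l : seq Topo) (j : nat) : seq PTree :=
             match l with
             | [::] => [::]
             | tj :: l' =>
                 (if has (prefix (rcons a j)) fs then build fs L p tj (rcons a j)
                  else empty_tree tj) :: go l' j.+1
             end in
           Internal (go ts 1) (restrict_pifo fs a p)
       end.

Fixpoint lift_pt (t2 : Topo) (f : seq nat -> seq nat) (q : PTree) : PTree :=
  match q with
  | Leaf p => Leaf p
  | Internal qs p =>
      let fix go (l : seq PTree) (k : nat) : seq PTree :=
        match l with
        | [::] => [::]
        | c :: l' => lift_pt (subtopo t2 (f [:: k])) (sub_emb f k) c :: go l' k.+1
        end in
      build [seq f [:: i] | i <- iota 1 (size qs)] (go qs 1) p t2 [::]
  end.

End PIFO.

(* Main.v *)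
Require Import Defs.
From mathcomp Require Import all_boot all_order.
Set Implicit Arguments. Unset Strict Implicit. Unset Printing Implicit Defensive.
Import Order.TTheory.

Lemma in_addr_cat t b c : in_addr t (b ++ c) = in_addr t b && in_addr (subtopo t b) c.
Proof.
elim: b t => [|x b IH] [|ts] //=.
by rewrite IH andbA.
Qed.

Lemma subtopo_cat t b c : subtopo t (b ++ c) = subtopo (subtopo t b) c.
Proof. elim: b t => [|x b IH] [|ts] //=; by case: (c). Qed.

Lemma prefix_cat2 (s x y : seq nat) : prefix (s ++ x) (s ++ y) = prefix x y.
Proof. by rewrite prefix_catr // eqxx. Qed.

Lemma sub_emb_ok ts t2 f i : is_embedding (Node ts) t2 f -> 0 < i <= size ts ->
  is_embedding (nth Star ts i.-1) (subtopo t2 (f [:: i])) (sub_emb f i).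
Proof.
case=> f0 fin finj fstar fpre Hi.
have Hai a : in_addr (Node ts) (i :: a) = in_addr (nth Star ts i.-1) a by rewrite /= Hi.
have Hi1 : in_addr (Node ts) [:: i] by rewrite Hai; case: (nth _ _ _).
have Hdec a : in_addr (nth Star ts i.-1) a -> f (i :: a) = f [:: i] ++ sub_emb f i a.
  move=> Ha; have : prefix (f [:: i]) (f (i :: a)).
    by rewrite -fpre // ?Hai //= eqxx prefix0s.
  by move=> /prefixP [s E]; rewrite /sub_emb E drop_size_cat.
split.
- by rewrite /sub_emb drop_size.
- move=> a Ha; have : in_addr (Node ts) (i :: a) by rewrite Hai.
  move=> /fin; rewrite (Hdec _ Ha) in_addr_cat => /andP[_ ->]; done.
- move=> a b Ha Hb E.
  have Ha' : in_addr (Node ts) (i :: a) by rewrite Hai.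
  have Hb' : in_addr (Node ts) (i :: b) by rewrite Hai.
  have := finj _ _ Ha' Hb'; rewrite (Hdec _ Ha) (Hdec _ Hb) E => /(_ erefl); by case.
- move=> a Ha Hs.
  have Ha' : in_addr (Node ts) (i :: a) by rewrite Hai.
  rewrite -subtopo_cat -(Hdec _ Ha); apply: (fstar _ Ha'); exact: Hs.
- move=> a b Ha Hb.
  have Ha' : in_addr (Node ts) (i :: a) by rewrite Hai.
  have Hb' : in_addr (Node ts) (i :: b) by rewrite Hai.
  rewrite -[RHS](prefix_cat2 (f [:: i])) -(Hdec _ Ha) -(Hdec _ Hb) -(fpre _ _ Ha' Hb') /= eqxx; done.
Qed.
Section P2.
Context {d : Order.disp_t} (Rk : orderType d) (Pkt : Type).

Lemma pop_entry_None (S : Type) (p : PIFO Rk S) : pop_entry p = None -> p = [::].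
Proof. case: p => //= x p; by case: (pop_entry p) => [[? ?]|] //; case: ifP. Qed.

Lemma pop_entry_min (S : Type) (p : PIFO Rk S) e r b :
  pop_entry p = Some (e, r) -> all (fun x => (b <= x.2)%O) p -> (b <= e.2)%O.
Proof.
elim: p e r => [|x p IH] e r //=.
case E: (pop_entry p) => [[e' p'']|].
  case: ifP => _ [<- _] /andP[Hx Hp] //; exact: IH E Hp.
by move=> [<- _] /andP[].
Qed.

Lemma pop_entry_all (S : Type) (p : PIFO Rk S) e r :
  pop_entry p = Some (e, r) -> all (fun x => (e.2 <= x.2)%O) p.
Proof.
elim: p e r => [|x p IH] e r //=.
case E: (pop_entry p) => [[e' p'']|].
  have H := IH _ _ E.
  case: ifP => Hle [<- _]; rewrite ?lexx /=.
    by apply: sub_all H => y; apply: le_trans.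
  by rewrite H andbT; apply: ltW; rewrite ltNge Hle.
by move=> [<- _]; rewrite lexx (pop_entry_None E).
Qed.

Lemma all_pmap_of (S T : Type) (g : S -> option T) (a : pred S) (b : pred T) p :
  (forall x y, g x = Some y -> a x -> b y) -> all a p -> all b (pmap g p).
Proof.
move=> H; elim: p => //= x p IH /andP[ax ap].
by case Gx: (g x) => [y|] /=; rewrite IH // andbT; exact: H Gx ax.
Qed.

Lemma pop_entry_pmap (S T : Type) (g : S * Rk -> option (T * Rk)) (p : PIFO Rk S) e r e' :
  (forall x y, g x = Some y -> y.2 = x.2) ->
  pop_entry p = Some (e, r) -> g e = Some e' ->
  exists r', pop_entry (pmap g p) = Some (e', r').
Proof.
move=> Hg; elim: p e r => [|x p IH] e r //=.
case E: (pop_entry p) => [[e1 p1]|].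
  case: ifP => Hle [<- _] Hge.
    rewrite /= Hge /=.
    case E2: (pop_entry (pmap g p)) => [[e2 p2]|]; last by eexists.
    have -> : (e'.2 <= e2.2)%O.
      apply: (pop_entry_min E2); apply: all_pmap_of (pop_entry_all E).
      move=> z y Hz /=; rewrite (Hg _ _ Hz) (Hg _ _ Hge).
      exact: le_trans Hle.
    by eexists.
  have [r' E'] := IH _ _ E Hge.
  case Gx: (g x) => [x'|] /=; rewrite E'; last by eexists.
  have -> : (x'.2 <= e'.2)%O = false.
    by rewrite (Hg _ _ Gx) (Hg _ _ Hge) Hle.
  by eexists.
move=> [<- _] Hge; rewrite /= Hge /=.
rewrite (pop_entry_None E) /=.
by eexists.
Qed.
End P2.
Section P.
Context {d : Order.disp_t} (Rk : orderType d) (Pkt : Type).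
Notation PT := (PTree Rk Pkt).

Fixpoint popgo (l : seq PT) (k : nat) : option (Pkt * seq PT) :=
  match l with
  | [::] => None
  | c :: l' =>
      match k with
      | 0 => None
      | 1 => omap (fun r => (r.1, r.2 :: l')) (pop c)
      | k'.+1 => omap (fun r => (r.1, c :: r.2)) (popgo l' k')
      end
  end.

Lemma pop_Internal qs (p : PIFO Rk nat) : pop (Internal qs p) =
  match pop_PIFO p with
  | None => None
  | Some (i, p') => omap (fun r => (r.1, Internal r.2 p')) (popgo qs i)
  end.
Proof. by []. Qed.

Lemma popgo_ok l k : popgo l k <> None -> 0 < k <= size l /\ pop (nth (Leaf [::] : PT) l k.-1) <> None.
Proof.
elim: l k => [|c l IH] [|[|k]] //=.
  by case: (pop c).
case E: (popgo l k.+1) => [x|] // _.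
have [] := IH k.+1; by rewrite ?E.
Qed.

Lemma popgo_ok2 l k : 0 < k <= size l -> pop (nth (Leaf [::] : PT) l k.-1) <> None -> popgo l k <> None.
Proof.
elim: l k => [|c l IH] [|[|k]] //=.
  by case: (pop c).
move=> Hk H; have := IH k.+1 Hk H; by case: (popgo l k.+1).
Qed.

Definition bgo (fs : seq (seq nat)) (L : seq PT) (p : PIFO Rk nat) (a : seq nat) :=
  fix go (l : seq Topo) (j : nat) : seq PT :=
  match l with
  | [::] => [::]
  | tj :: l' =>
      (if has (prefix (rcons a j)) fs then build fs L p tj (rcons a j)
       else empty_tree Rk Pkt tj) :: go l' j.+1
  end.

Lemma build_Node fs L p ts a :
  build fs L p (Node ts) a =
  if find (pred1 a) fs < size fs then nth (Leaf [::] : PT) L (find (pred1 a) fs)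
  else Internal (bgo fs L p a ts 1) (restrict_pifo fs a p).
Proof. by []. Qed.

Lemma build_find fs L p t a : find (pred1 a) fs < size fs ->
  build fs L p t a = nth (Leaf [::] : PT) L (find (pred1 a) fs).
Proof. by case: t => [|ts] /= ->. Qed.

Lemma size_bgo fs L p a l j : size (bgo fs L p a l j) = size l.
Proof. by elim: l j => //= t l IH j; rewrite IH. Qed.

Lemma nth_bgo fs L p a l j k : k < size l ->
  nth (Leaf [::] : PT) (bgo fs L p a l j) k =
  if has (prefix (rcons a (j + k))) fs then build fs L p (nth Star l k) (rcons a (j + k))
  else empty_tree Rk Pkt (nth Star l k).
Proof.
elim: l j k => [|t l IH] j [|k] //=; first by rewrite addn0.
by move=> Hk; rewrite IH // addSnnS.
Qed.

Definition lgo (t2 : Topo) (f : seq nat -> seq nat) :=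
  fix go (l : seq PT) (k : nat) : seq PT :=
  match l with
  | [::] => [::]
  | c :: l' => lift_pt (subtopo t2 (f [:: k])) (sub_emb f k) c :: go l' k.+1
  end.

Lemma lift_Internal t2 f qs p : lift_pt t2 f (Internal qs p) =
  build [seq f [:: i] | i <- iota 1 (size qs)] (lgo t2 f qs 1) p t2 [::].
Proof. by []. Qed.

Lemma nth_lgo t2 f l k j : k < size l ->
  nth (Leaf [::] : PT) (lgo t2 f l j) k =
  lift_pt (subtopo t2 (f [:: j + k])) (sub_emb f (j + k)) (nth (Leaf [::] : PT) l k).
Proof.
elim: l j k => [|t l IH] j [|k] //=; first by rewrite addn0.
by move=> Hk; rewrite IH // addSnnS.
Qed.
End P.

Section Main.
Context {d : Order.disp_t} (Rk : orderType d) (Pkt : Type).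
Notation PT := (PTree Rk Pkt).
Variables (fs : seq (seq nat)) (L : seq PT) (p : PIFO Rk nat) (t2 : Topo)
  (i : nat) (r : Rk) (p'' : PIFO Rk nat).
Hypotheses (Hpop : pop_entry p = Some ((i, r), p''))
  (Hi : 0 < i <= size fs)
  (Hin : in_addr t2 (nth [::] fs i.-1))
  (HL : pop (nth (Leaf [::] : PT) L i.-1) <> None)
  (Hpre : forall k, k < size fs -> k != i.-1 -> ~~ prefix (nth [::] fs k) (nth [::] fs i.-1)).

Lemma Hi1 : i.-1 < size fs.
Proof. by case: i Hi. Qed.

Lemma build_fi t : pop (build fs L p t (nth [::] fs i.-1)) <> None.
Proof.
set fi := nth [::] fs i.-1.
have Hh : has (pred1 fi) fs by apply/(has_nthP [::]); exists i.-1; rewrite ?Hi1 //=.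
have Hf : find (pred1 fi) fs = i.-1.
  have := nth_find [::] Hh; rewrite /= => /eqP E.
  apply/eqP; apply/negPn/negP => Hne.
  have Hk : find (pred1 fi) fs < size fs by rewrite -has_find.
  by have := Hpre Hk Hne; rewrite E prefix_refl.
by rewrite build_find Hf // Hi1.
Qed.

Lemma build_pop n a : size (nth [::] fs i.-1) - size a <= n ->
  prefix a (nth [::] fs i.-1) -> pop (build fs L p (subtopo t2 a) a) <> None.
Proof.
set fi := nth [::] fs i.-1.
elim: n a => [|n IH] a Hn Ha; (case: (eqVneq a fi) => [->|Hne]; first exact: build_fi);
  case/prefixP: Ha (Ha) Hn => [[|j s] Es Ha Hn]; try by rewrite Es cats0 eqxx in Hne.
  by move: Hn; rewrite Es size_cat /= addnS subSn ?leq_addr // addKn.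
have Hnh : ~~ has (pred1 a) fs.
  apply/negP => /(has_nthP [::]) [k Hk /eqP Hka].
  case: (eqVneq k i.-1) => [Ek|Hk']; first by move: Hne; rewrite -Hka Ek /fi eqxx.
  by have := Hpre Hk Hk'; rewrite Hka Ha.
have Hin' := Hin; rewrite -/fi Es in_addr_cat in Hin'; case/andP: Hin' => _.
case T: (subtopo t2 a) => [|ts'] //= /andP [/andP [j0 jle] Hrest].
rewrite (hasNfind Hnh) ltnn -/(bgo fs L p a ts' 1) pop_Internal /pop_PIFO.
set g := (fun e : nat * Rk => omap (fun j => (j, e.2)) (child_toward a (nth [::] fs e.1.-1))).
have Hg : forall x y, g x = Some y -> y.2 = x.2.
  by move=> x y; rewrite /g; case: (child_toward _ _) => //= z [<-].
have Hgi : g (i, r) = Some (j, r).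
  rewrite /g /= -/fi /child_toward Es prefix_prefix size_cat /= addnS ltnS leq_addr /=.
  by rewrite nth_cat ltnn subnn.
have [r' E] := pop_entry_pmap Hg Hpop Hgi.
rewrite /restrict_pifo -/g E /=.
have : popgo (bgo fs L p a ts' 1) j <> None.
  apply: popgo_ok2; first by rewrite size_bgo j0 jle.
  have Hj : j.-1 < size ts' by case: j j0 jle {Es Hgi E Hrest}.
  rewrite nth_bgo // add1n prednK //.
  have -> : has (prefix (rcons a j)) fs.
    apply/(has_nthP [::]); exists i.-1; first exact: Hi1.
    by rewrite -/fi Es -cats1 prefix_cat2 /= eqxx prefix0s.
  have -> : nth Star ts' j.-1 = subtopo t2 (rcons a j) by rewrite -cats1 subtopo_cat T.
  apply: IH; last by rewrite -/fi Es -cats1 prefix_cat2 /= eqxx prefix0s.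
  move: Hn; rewrite Es !size_cat size_rcons /= !addnS subSn ?leq_addr // addKn subSS addKn.
by case: (popgo (bgo fs L p a ts' 1) j).
Qed.
End Main.

Theorem lemma5p6 (d : Order.disp_t) (Rk : orderType d) (Pkt : Type)
    (t1 t2 : Topo) (f : seq nat -> seq nat) (q : PTree Rk Pkt) :
  is_embedding t1 t2 f ->
  typed t1 q ->
  pop q <> None ->
  pop (lift_pt t2 f q) <> None.
Proof.
move=> He Ht; elim: Ht t2 f He => [pl | ts qs p Hsz Hty IH Hfst] t2 f He Hp //.
move: Hp; rewrite pop_Internal lift_Internal /pop_PIFO.
case E: (pop_entry p) => [[[i r] p'']|] //= Hp.
have [/andP [i0 ile] Hq] : 0 < i <= size qs /\ pop (nth (Leaf [::]) qs i.-1) <> None.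
  by apply: popgo_ok; case: (popgo qs i) Hp.
have He' := He; case: He' => f0 fin finj fstar fpre.
set fs := [seq f [:: k] | k <- iota 1 (size qs)].
have Hsfs : size fs = size qs by rewrite size_map size_iota.
have Hnth k : k < size qs -> nth [::] fs k = f [:: k.+1].
  by move=> Hk; rewrite (nth_map 0) ?size_iota // nth_iota.
have Hi1 : i.-1 < size qs by case: i i0 ile {E Hp Hq}.
have Hai k : 0 < k <= size qs -> in_addr (Node ts) [:: k].
  by move=> Hk /=; rewrite andbT -Hsz.
have Hfi : nth [::] fs i.-1 = f [:: i] by rewrite Hnth // prednK.
have := @build_pop _ _ _ fs (lgo t2 f qs 1) p t2 i r p'' E; apply.
- by rewrite Hsfs i0 ile.
- by rewrite Hfi; apply: fin; apply: Hai; rewrite i0 ile.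
- rewrite (nth_lgo _ _ _ Hi1) add1n prednK //.
  apply: IH; first by rewrite -Hsz.
  + apply: sub_emb_ok => //; by rewrite -Hsz i0 ile.
  + exact: Hq.
- move=> k Hk Hne; rewrite Hfi Hnth -?Hsfs // -fpre ?Hai ?i0 ?ile //= ?andbT.
  + by apply: contra Hne => /eqP <-.
  + by rewrite -Hsfs.
- by rewrite subn0.
- by rewrite prefix0s.
Qed.
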